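(* Let $G$ be a finite group and $p$ a prime dividing $|G|$. The finite poset $\mathcal{A}_p(G)/G$ is conically contractible.
   Context: $\mathcal{A}_p(G)$ is the poset of non-trivial elementary abelian $p$-subgroups of $G$ ordered by inclusion, with $G$ acting by conjugation $A^g=g^{-1}Ag$. $\mathcal{A}_p(G)/G$ is the orbit poset: $\overline{A}\le\overline{B}$ iff there are $A_1\in\overline{A}$, $B_1\in\overline{B}$ with $A_1\le B_1$. A finite poset $X$ is conically contractible if there exist an order-preserving map $f:X\to X$ and a point $x_0\in X$ such that $x\le f(x)\ge x_0$ for all $x\in X$ (or the dual inequalities), so that $\mathrm{id}_X$ is homotopic to a constant map. *)

(* Defs.v *)
From mathcomp Require Import all_boot all_fingroup all_solvable.
Set Implicit Arguments. Unset Strict Implicit. Unset Printing Implicit Defensive.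
Local Open Scope group_scope.

Definition Ap (gT : finGroupType) (p : nat) (G : {set gT}) : {set {group gT}} :=
  [set E in 'E_p(G) | E :!=: 1].

Definition conj_orbit (gT : finGroupType) (G : {set gT}) (A : {group gT})
  : {set {group gT}} := [set (A :^ g)%G | g in G].

Definition ApG (gT : finGroupType) (p : nat) (G : {set gT})
  : {set {set {group gT}}} := [set conj_orbit G A | A in Ap p G].

Definition orb_le (gT : finGroupType) (O1 O2 : {set {group gT}}) : bool :=
  [exists A in O1, exists B in O2, (A \subset B)].

Definition conically_contractible (T : finType) (X : {set T}) (le : rel T)
  : Prop :=
  exists (f : T -> T) (x0 : T),
    [/\ x0 \in X,
        {in X, forall x, f x \in X},
        {in X &, forall x y, le x y -> le (f x) (f y)} &
        ({in X, forall x, le x (f x) /\ le x0 (f x)} \/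
         {in X, forall x, le (f x) x /\ le (f x) x0})].

(* Main.v *)
Require Import Defs.
From mathcomp Require Import all_boot all_fingroup all_solvable.

Set Implicit Arguments. Unset Strict Implicit. Unset Printing Implicit Defensive.
Local Open Scope group_scope.

Lemma centerJ_ (gT : finGroupType) (H : {set gT}) x : 'Z(H :^ x) = 'Z(H) :^ x.
Proof. by rewrite /center conjIg centJ. Qed.

Lemma syl_max (gT : finGroupType) p (H R X : {group gT}) :
  p.-Sylow(H) R -> p.-group X -> X \subset H -> X \subset 'N(R) -> X \subset R.
Proof.
move=> sylR pX sXH nRX.
apply: (@norm_sub_max_pgroup _ p X R H) => //.
by rewrite (max_pgroup_Sylow p H R).
Qed.

Lemma keyZ (gT : finGroupType) p (G B R Q : {group gT}) :
  p.-Sylow('C_G(B)) R -> B \subset R -> R \subset Q -> Q \subset G ->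
  p.-group Q -> 'Z(Q) \subset 'Z(R).
Proof.
move=> sylR sBR sRQ sQG pQ.
have sZC : 'Z(Q) \subset 'C(Q) by rewrite /center subsetIr.
have sZR : 'Z(Q) \subset R.
  apply: (syl_max sylR).
  - exact: pgroupS (center_sub Q) pQ.
  - rewrite subsetI (subset_trans (center_sub Q) sQG) /=.
    by apply: (subset_trans sZC); apply: centS; apply: subset_trans sRQ.
  - by apply: (subset_trans sZC); apply: subset_trans (cent_sub R); apply: centS.
by rewrite /center subsetI sZR /= (subset_trans sZC) // centS.
Qed.

Definition RC (gT : finGroupType) p (G : {group gT}) (A : {set gT}) : {group gT} :=
  sval (Sylow_exists p ('C_G(A))%G).

Lemma RC_syl (gT : finGroupType) p (G : {group gT}) (A : {set gT}) :
  p.-Sylow('C_G(A)) (RC p G A).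
Proof. exact: (svalP (Sylow_exists p ('C_G(A))%G)). Qed.

Definition FA (gT : finGroupType) p (G : {group gT}) (A : {set gT}) : {group gT} :=
  ('Ohm_1('Z(RC p G A)))%G.

Definition fO (gT : finGroupType) p (G : {group gT}) (O : {set {group gT}}) :=
  if [pick A in O] is Some A then conj_orbit G (FA p G A) else O.

Lemma Ap_sub (gT : finGroupType) p (G : {group gT}) (A : {group gT}) :
  A \in Ap p G -> [/\ A \subset G, p.-abelem A & A :!=: 1].
Proof. by rewrite inE => /andP[/pElemP[]]. Qed.

Lemma sub_Syl (gT : finGroupType) p (G A R : {group gT}) :
  A \in Ap p G -> p.-Sylow('C_G(A)) R -> A \subset R.
Proof.
case/Ap_sub=> sAG abA _ sylR.
have [_ cAA _] := and3P abA.
have sRC := pHall_sub sylR.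
apply: (syl_max sylR); first exact: abelem_pgroup abA.
  by rewrite subsetI sAG.
apply: subset_trans (cent_sub R).
by rewrite centsC (subset_trans sRC) // subsetIr.
Qed.

Lemma sub_FA (gT : finGroupType) p (G A R : {group gT}) :
  A \in Ap p G -> p.-Sylow('C_G(A)) R -> A \subset 'Ohm_1('Z(R)).
Proof.
move=> ApA sylR; have sAR := sub_Syl ApA sylR.
case/Ap_sub: ApA => sAG abA _.
rewrite -(Ohm1_id abA) OhmS // /center subsetI sAR /= centsC.
by rewrite (subset_trans (pHall_sub sylR)) // subsetIr.
Qed.

Lemma FA_Ap (gT : finGroupType) p (G A R : {group gT}) :
  A \in Ap p G -> p.-Sylow('C_G(A)) R -> ('Ohm_1('Z(R)))%G \in Ap p G.
Proof.
move=> ApA sylR; have sA := sub_FA ApA sylR.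
have pR := pHall_pgroup sylR.
case/Ap_sub: (ApA) => sAG abA ntA.
rewrite inE; apply/andP; split; last first.
  by apply: contra ntA => /eqP E; rewrite -subG1 -E.
apply/pElemP; split.
  apply: subset_trans (Ohm_sub 1 _) _; apply: subset_trans (center_sub _) _.
  by apply: subset_trans (pHall_sub sylR) _; apply: subsetIl.
apply: Ohm1_abelem; last exact: center_abelian.
exact: pgroupS (center_sub _) pR.
Qed.

Lemma ApJ (gT : finGroupType) p (G A : {group gT}) g :
  g \in G -> A \in Ap p G -> (A :^ g)%G \in Ap p G.
Proof.
move=> Gg; case/Ap_sub=> sAG abA ntA; rewrite inE; apply/andP; split.
  by apply/pElemP; rewrite abelemJ -(conjGid Gg) conjSg.
by apply: contra ntA => /eqP E; rewrite -(conjsg_eq1 _ g) E.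
Qed.

Lemma subcentJ_ (gT : finGroupType) (G : {group gT}) (A : {set gT}) g :
  g \in G -> 'C_G(A :^ g) = 'C_G(A) :^ g.
Proof. by move=> Gg; rewrite conjIg centJ conjGid. Qed.

Lemma SylJ (gT : finGroupType) p (G A R : {group gT}) g :
  g \in G -> p.-Sylow('C_G(A)) R -> p.-Sylow('C_G(A :^ g)) (R :^ g).
Proof. by move=> Gg; rewrite subcentJ_ // pHallJ2. Qed.

Lemma mono0 (gT : finGroupType) p (G A B RA RB : {group gT}) :
  A \in Ap p G -> B \in Ap p G -> A \subset B ->
  p.-Sylow('C_G(A)) RA -> p.-Sylow('C_G(B)) RB ->
  exists2 c, c \in G & 'Ohm_1('Z(RA)) :^ c \subset 'Ohm_1('Z(RB)).
Proof.
move=> ApA ApB sAB sylA sylB.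
have sRB : RB \subset 'C_G(A).
  apply: subset_trans (pHall_sub sylB) _.
  by apply: setIS; apply: centS.
have [Q sylQ sBQ] := Sylow_superset sRB (pHall_pgroup sylB).
have [c Cc defQ] := Sylow_trans sylA sylQ.
have Gc : c \in G by move: Cc; rewrite inE => /andP[].
exists c => //.
rewrite -OhmJ -centerJ_ -defQ OhmS //.
apply: (keyZ sylB) => //.
- exact: sub_Syl ApB sylB.
- by apply: subset_trans (pHall_sub sylQ) _; apply: subsetIl.
- exact: pHall_pgroup sylQ.
Qed.

Lemma orb_memJ (gT : finGroupType) (G A : {group gT}) g :
  g \in G -> (A :^ g)%G \in conj_orbit G A.
Proof. by move=> Gg; apply/imsetP; exists g. Qed.

Lemma orb_mem1 (gT : finGroupType) (G A : {group gT}) : A \in conj_orbit G A.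
Proof.
have E : A = (A :^ 1)%G by apply: val_inj; rewrite /= conjsg1.
by rewrite {1}E; apply: orb_memJ.
Qed.

Lemma orb_leI (gT : finGroupType) (O1 O2 : {set {group gT}}) A B :
  A \in O1 -> B \in O2 -> A \subset B -> orb_le O1 O2.
Proof.
move=> AO BO sAB; apply/existsP; exists A; rewrite AO /=.
by apply/existsP; exists B; rewrite BO.
Qed.

Lemma sameorb (gT : finGroupType) p (G X A A1 : {group gT}) :
  X \in Ap p G -> A \in conj_orbit G X -> A1 \in conj_orbit G X ->
  [/\ A \in Ap p G & exists2 k, k \in G & A1 = (A :^ k)%G].
Proof.
move=> ApX /imsetP[a Ga ->] /imsetP[a1 Ga1 ->]; split; first exact: ApJ.
exists (a^-1 * a1); first by rewrite groupM ?groupV.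
by apply: val_inj; rewrite /= -conjsgM mulgA mulgV mul1g.
Qed.

Lemma pickO (gT : finGroupType) p (G : {group gT}) O :
  O \in ApG p G -> exists X, [/\ X \in Ap p G, O = conj_orbit G X &
   exists A, [/\ [pick A in O] = Some A, A \in O & A \in Ap p G]].
Proof.
case/imsetP=> X ApX ->; exists X; split => //.
case: pickP => [A AO | /(_ X)]; last by rewrite orb_mem1.
exists A; split => //; by case: (sameorb ApX AO AO).
Qed.

Lemma OhmZJ (gT : finGroupType) (R : {group gT}) k :
  'Ohm_1('Z(R :^ k)) = 'Ohm_1('Z(R)) :^ k.
Proof. by rewrite centerJ_ OhmJ. Qed.

Theorem theorem4p3 (gT : finGroupType) (G : {group gT}) (p : nat) :
  prime p -> p %| #|G| ->
  conically_contractible (ApG p G) (@orb_le gT).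
Proof.
move=> pr_p pG.
have [S sylS] := Sylow_exists p G.
have pS := pHall_pgroup sylS.
have ApZ : ('Ohm_1('Z(S)))%G \in Ap p G.
  rewrite inE; apply/andP; split.
    apply/pElemP; split.
      by apply: subset_trans (Ohm_sub 1 _) _; apply: subset_trans (center_sub _) (pHall_sub sylS).
    by apply: Ohm1_abelem; [exact: pgroupS (center_sub _) pS | exact: center_abelian].
  rewrite /= Ohm1_eq1; apply/negP => /eqP Z1.
  have S1 := trivg_center_pgroup pS Z1.
  have := card_Hall sylS; rewrite S1 cards1 => /esym E.
  have : 1 < #|G|`_p by rewrite p_part_gt1 mem_primes pr_p cardG_gt0 pG.
  by rewrite E.
exists (fO p G), (conj_orbit G ('Ohm_1('Z(S)))%G); split.
- exact: imset_f.
- move=> O /pickO[X [ApX -> [A [pk AO ApA]]]].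
  rewrite /fO pk; apply: imset_f; exact: FA_Ap ApA (RC_syl p G A).
- move=> O1 O2 /pickO[X [ApX E1 [A [pk1 AO ApA]]]] /pickO[Y [ApY E2 [B [pk2 BO ApB]]]].
  case/existsP=> A1 /andP[A1O /existsP[B1 /andP[B1O sAB]]].
  rewrite /fO pk1 pk2.
  move: AO A1O; rewrite E1 => AO A1O.
  move: BO B1O; rewrite E2 => BO B1O.
  have [_ [k Gk defA1]] := sameorb ApX AO A1O.
  have [_ [k2 Gk2 defB1]] := sameorb ApY BO B1O.
  have ApA1 : A1 \in Ap p G by rewrite defA1 ApJ.
  have ApB1 : B1 \in Ap p G by rewrite defB1 ApJ.
  have sylA1 : p.-Sylow('C_G(A1)) (RC p G A :^ k)%G by rewrite defA1 SylJ // RC_syl.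
  have sylB1 : p.-Sylow('C_G(B1)) (RC p G B :^ k2)%G by rewrite defB1 SylJ // RC_syl.
  have [c Gc sub] := mono0 ApA1 ApB1 sAB sylA1 sylB1.
  apply: (orb_leI (A := (FA p G A :^ (k * c))%G) (B := (FA p G B :^ k2)%G)).
  + by apply: orb_memJ; rewrite groupM.
  + exact: orb_memJ.
  + by move: sub; rewrite /= !OhmZJ conjsgM.
- left => O /pickO[X [ApX E [A [pk AO ApA]]]]; rewrite /fO pk; split.
    exact: orb_leI AO (orb_mem1 _ _) (sub_FA ApA (RC_syl p G A)).
  have sylA := RC_syl p G A.
  have sRG : RC p G A \subset G by apply: subset_trans (pHall_sub sylA) (subsetIl _ _).
  have [g Gg sRS] := Sylow_subJ sylS sRG (pHall_pgroup sylA).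
  apply: (orb_leI (A := ('Ohm_1('Z(S)) :^ g)%G) (B := FA p G A)).
  + exact: orb_memJ.
  + exact: orb_mem1.
  + rewrite /= -OhmZJ OhmS // (keyZ sylA (sub_Syl ApA sylA) sRS) //.
      by rewrite -(conjGid Gg) conjSg (pHall_sub sylS).
    by rewrite pgroupJ.
Qed.
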